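(* Assume the standing setting below. Let $\alpha\in(0,1/6]$ with $\alpha n$ an integer, let $P_1\subseteq X$ with $|P_1|=\alpha n$, and let $T_\alpha\subseteq X$ be any nonempty set. Let $\mathcal{B}_a$ be a $(\phi_\alpha/15)$-linear bin division of $X$ with respect to $\mathrm{OPT}$. Suppose $n\ge\phi_\alpha/15$, that $\mathcal{B}_a$ is well-represented in $P_1$ for $X$, and that for every $i$ with $|C_i^*|\ge\phi_\alpha$, $C_i^*$ is well-represented in $P_1$ for $X$. Then $$R(X^\alpha_{\mathrm{large}},T_\alpha)\le R(X^\alpha_{\mathrm{large}},\mathrm{OPT})+\frac4\alpha\Big(R(P_1\setminus\mathcal{B}_a(1),\mathrm{OPT})+R(P_1,T_\alpha)\Big).$$
   Context: Standing setting: $(X,\rho)$ is a finite metric space with $|X|=n$; $k\ge 2$ is an integer and $\delta\in(0,1)$; $\log$ is the natural logarithm. For nonempty $T\subseteq X$, $\rho(x,T):=\min_{y\in T}\rho(x,y)$ and $R(S,T):=\sum_{x\in S}\rho(x,T)$; ties in minimizations are broken by a fixed ordering. $\mathrm{OPT}=\{c_1^*,\ldots,c_k^*\}$ is a set of at most $k$ points of $X$ minimizing $R(X,\cdot)$, and $C_i^*:=\{x\in X: i=\arg\min_{j\in[k]}\rho(c_j^*,x)\}$. For $\alpha>0$, $\phi_\alpha:=150\log(32k/\delta)/\alpha$; $X^\alpha_{\mathrm{large}}:=\bigcup\{C_i^*: |C_i^*|\ge\phi_\alpha\}$. For finite $W$, $A,B\subseteq W$, $B$ is well-represented in $A$ for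 $W$ if $|B\cap A|/|B|\in[r/2,\frac32 r]$ with $r=|A|/|W|$; a bin division is well-represented if all its bins are. A $z$-linear bin division ($z>0$) of $W$ with respect to $T$ is a partition $(\mathcal{B}(1),\ldots,\mathcal{B}(L))$ of $W$ with: (1) if $z\le|W|$, $|\mathcal{B}(i)|\ge z(i+1)/2$ for all $i$; otherwise it is trivial, $\mathcal{B}(1):=W$; (2) $|\mathcal{B}(1)|\le\frac52 z$; (3) $|\mathcal{B}(i+1)|/|\mathcal{B}(i)|\le3/2$; (4) $\rho(x,T)\ge\rho(x',T)$ whenever $x\in\mathcal{B}(i)$, $x'\in\mathcal{B}(i+1)$. *)

(* Defs.v *)
From HB Require Import structures.
From mathcomp Require Import all_boot all_order all_algebra.
From mathcomp Require Import reals exp.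
Set Implicit Arguments. Unset Strict Implicit. Unset Printing Implicit Defensive.
Import Order.TTheory GRing.Theory Num.Theory.
Local Open Scope ring_scope.

Section Defs.
Variables (R : realType) (T : finType).

(* rho is a metric on the finite point set T (= X). *)
Definition is_metric (rho : T -> T -> R) : Prop :=
  [/\ forall x, rho x x = 0,
      forall x y, rho x y = 0 -> x = y,
      forall x y, rho x y = rho y x &
      forall x y z, rho x z <= rho x y + rho y z].

(* rho(x,S) := min_{y in S} rho x y  (for nonempty S; 0 by convention if S is empty) *)
Definition dist (rho : T -> T -> R) (x : T) (S : {set T}) : R :=
  if [pick y in S] is Some y0 then \big[Num.min/rho x y0]_(y in S) rho x y else 0.

Definition cost (rho : T -> T -> R) (S U : {set T}) : R :=
  \sum_(x in S) dist rho x U.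

Definition centers (k : nat) (c : 'I_k -> T) : {set T} := [set c j | j : 'I_k].

(* index of the nearest center to x, ties broken by the smallest index *)
Definition nearest (rho : T -> T -> R) (k : nat) (c : 'I_k -> T) (x : T) : option 'I_k :=
  [pick j : 'I_k | [forall j' : 'I_k, rho (c j) x <= rho (c j') x]].

Definition cluster (rho : T -> T -> R) (k : nat) (c : 'I_k -> T) (i : 'I_k) : {set T} :=
  [set x | nearest rho c x == Some i].

Definition is_opt (rho : T -> T -> R) (k : nat) (c : 'I_k -> T) : Prop :=
  forall S : {set T}, S != set0 -> (#|S| <= k)%N ->
    cost rho setT (centers c) <= cost rho setT S.

Definition phi (k : nat) (delta alpha : R) : R :=
  150 * ln (32 * k%:R / delta) / alpha.

Definition Xlarge (rho : T -> T -> R) (k : nat) (c : 'I_k -> T) (delta alpha : R) : {set T} :=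
  \bigcup_(i : 'I_k | phi k delta alpha <= #|cluster rho c i|%:R) cluster rho c i.

Definition well_rep (W A B : {set T}) : Prop :=
  let r := #|A|%:R / #|W|%:R : R in
  r / 2 <= #|B :&: A|%:R / #|B|%:R <= 3 / 2 * r.

(* A z-linear bin division (B 1, ..., B L) of W w.r.t. U (bins indexed 1..L). *)
Definition linear_bin_division (rho : T -> T -> R) (z : R) (W U : {set T})
    (L : nat) (B : nat -> {set T}) : Prop :=
  [/\
      (1 <= L)%N /\
      (forall i j, (1 <= i <= L)%N -> (1 <= j <= L)%N -> i <> j -> [disjoint B i & B j]) /\
      \bigcup_(1 <= i < L.+1) B i = W,
      (if z <= #|W|%:R then forall i, (1 <= i <= L)%N -> z * ((i.+1)%:R : R) / 2 <= (#|B i|%:R : R)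
       else L = 1%N /\ B 1%N = W),
      (#|B 1%N|%:R : R) <= 5 / 2 * z,
      (forall i, (1 <= i < L)%N -> (#|B i.+1|%:R : R) / #|B i|%:R <= 3 / 2) &
      (forall i, (1 <= i < L)%N -> forall x x', x \in B i -> x' \in B i.+1 ->
         dist rho x' U <= dist rho x U)].

Definition well_rep_division (W A : {set T}) (L : nat) (B : nat -> {set T}) : Prop :=
  forall i, (1 <= i <= L)%N -> well_rep W A (B i).

End Defs.

(* Main.v *)
Require Import Defs.
From HB Require Import structures.
From mathcomp Require Import all_boot all_order all_algebra.
From mathcomp Require Import reals exp.
From mathcomp Require Import lra.
Import Order.TTheory GRing.Theory Num.Theory.
Local Open Scope ring_scope.

Section H.
Variables (R : realType) (T : finType) (rho : T -> T -> R).
Hypothesis hm : is_metric rho.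

Lemma rho_ge0 x y : 0 <= rho x y.
Proof.
case: hm => h0 _ hs ht.
have := ht x y x; rewrite h0 (hs y x) => h.
by rewrite -(@pmulr_rge0 _ 2) // mulr2n mulrDl !mul1r.
Qed.

Lemma dist_le x {S : {set T}} {y} : y \in S -> dist rho x S <= rho x y.
Proof.
move=> yS; rewrite /dist; case: pickP => [y0 _|/(_ y)]; last by rewrite yS.
rewrite (bigD1 y) //=.
by rewrite ge_min lexx.
Qed.

Lemma dist_att x (S : {set T}) : S != set0 -> exists2 y, y \in S & dist rho x S = rho x y.
Proof.
move=> /set0Pn [y1 y1S]; rewrite /dist; case: pickP => [y0 y0S|/(_ y1)]; last by rewrite y1S.
apply: (big_ind (fun v => exists2 y, y \in S & v = rho x y)).
- by exists y0.
- move=> a b [ya ha ->] [yb hb ->].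
  rewrite /Num.min; case: ifP => _; [by exists ya | by exists yb].
- by move=> i iS; exists i.
Qed.

Lemma dist_ge0 x (S : {set T}) : 0 <= dist rho x S.
Proof.
have [->|/(dist_att x) [y _ ->]] := eqVneq S set0; last exact: rho_ge0.
by rewrite /dist; case: pickP => [y|]; rewrite ?inE.
Qed.

Lemma sum_sub (A B : {set T}) (f : T -> R) : A \subset B -> (forall x, 0 <= f x) ->
  \sum_(x in A) f x <= \sum_(x in B) f x.
Proof.
move=> /subsetP sAB f0; rewrite [X in X <= _]big_mkcond [X in _ <= X]big_mkcond.
apply: ler_sum => x _; case: ifP => xA; first by rewrite (sAB _ xA).
by case: ifP.
Qed.

Lemma sum_ge0 (A : {set T}) (f : T -> R) : (forall x, 0 <= f x) -> 0 <= \sum_(x in A) f x.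
Proof. by move=> h; apply: sumr_ge0. Qed.

Lemma core (C S Ta : {set T}) (ci : T) (a : R) :
  0 < a -> Ta != set0 -> S \subset C -> a * #|C|%:R <= #|S|%:R ->
  \sum_(x in C) dist rho x Ta <=
  \sum_(x in C) rho x ci + a^-1 * (\sum_(y in S) rho y ci + \sum_(y in S) dist rho y Ta).
Proof.
move=> a0 Ta0 sSC hS.
have g0 : 0 <= \sum_(y in S) rho y ci + \sum_(y in S) dist rho y Ta.
  by apply: addr_ge0; apply: sumr_ge0 => *; [apply: rho_ge0|apply: dist_ge0].
have [C0|Cn0] := eqVneq #|C| 0%N.
  rewrite (eq_bigl (fun=> false)); last by move=> x; rewrite (cards0_eq C0) inE.
  rewrite big_pred0_eq (eq_bigl (fun=> false)); last by move=> x; rewrite (cards0_eq C0) inE.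
  by rewrite big_pred0_eq add0r mulr_ge0 // invr_ge0 ltW.
set G := \sum_(y in S) rho y ci + \sum_(y in S) dist rho y Ta.
have Sp : 0 < (#|S|%:R : R).
  apply: lt_le_trans hS; apply: mulr_gt0 => //; rewrite ltr0n lt0n; exact: Cn0.
have px : forall x, x \in C -> dist rho x Ta <= rho x ci + G / #|S|%:R.
  move=> x xC.
  rewrite -(ler_pM2r Sp) mulrDl divfK ?gt_eqF //.
  have -> : dist rho x Ta * #|S|%:R = \sum_(y in S) dist rho x Ta.
    by rewrite sumr_const mulr_natr.
  have -> : rho x ci * #|S|%:R = \sum_(y in S) rho x ci.
    by rewrite sumr_const mulr_natr.
  rewrite /G addrA -!big_split /=.
  apply: ler_sum => y yS.
  case: hm => _ _ hs ht.
  have [t tT ->] := dist_att y Ta Ta0.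
  apply: le_trans (dist_le x tT) _.
  apply: le_trans (ht x ci t) _; rewrite -addrA lerD2l.
  by rewrite (hs y ci); apply: ht.
apply: le_trans (ler_sum _ px) _.
rewrite big_split /= lerD2l sumr_const.
have hq : #|C|%:R / #|S|%:R <= a^-1.
  rewrite ler_pdivrMr // -(ler_pM2l a0) mulrA mulfV ?gt_eqF // mul1r //.
have -> : G / #|S|%:R *+ #|C| = G * (#|C|%:R / #|S|%:R).
  by rewrite -mulr_natr mulrC mulrA [_ * G]mulrC -mulrA.
by rewrite [_ * G]mulrC; apply: ler_wpM2l.
Qed.

Lemma clus_dist k (c : 'I_k -> T) i x :
  x \in cluster rho c i -> dist rho x (centers c) = rho x (c i).
Proof.
rewrite inE /nearest; case: pickP => // j /forallP hj /eqP[<-].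
case: hm => _ _ hs _.
apply/le_anti/andP; split.
  by apply: dist_le; rewrite /centers imset_f.
have [|y /imsetP[j' _ ->] ->] := dist_att x (centers c).
  by apply/set0Pn; exists (c j); rewrite imset_f.
by rewrite hs (hs x); apply: hj.
Qed.

Lemma clus_disj k (c : 'I_k -> T) i j :
  i != j -> [disjoint cluster rho c i & cluster rho c j].
Proof.
move=> ij; rewrite -setI_eq0; apply/eqP/setP => x; rewrite !inE.
case: eqP => // ->; apply/negbTE; by rewrite (inj_eq (@Some_inj _)).
Qed.

End H.

Theorem lemma12 (R : realType) (T : finType) (rho : T -> T -> R)
  (k : nat) (delta : R) (c : 'I_k -> T)
  (alpha : R) (P1 Talpha : {set T}) (L : nat) (B : nat -> {set T}) :
  is_metric rho ->
  (2 <= k)%N -> 0 < delta < 1 ->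
  is_opt rho c ->
  0 < alpha <= 1 / 6 ->
  (exists m : nat, alpha * #|T|%:R = m%:R) ->
  #|P1|%:R = alpha * #|T|%:R ->
  Talpha != set0 ->
  linear_bin_division rho (phi k delta alpha / 15) setT (centers c) L B ->
  phi k delta alpha / 15 <= #|T|%:R ->
  well_rep_division R setT P1 L B ->
  (forall i : 'I_k, phi k delta alpha <= #|cluster rho c i|%:R ->
     well_rep R setT P1 (cluster rho c i)) ->
  cost rho (Xlarge rho c delta alpha) Talpha <=
    cost rho (Xlarge rho c delta alpha) (centers c)
    + 4 / alpha * (cost rho (P1 :\: B 1%N) (centers c) + cost rho P1 Talpha).
Proof.
move=> hm k2 /andP[d0 d1] _ /andP[a0 _] _ hP1 Ta0 hlb hzT hwrB hwrC.
set phi0 := phi k delta alpha.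
have phi_gt0 : 0 < phi0.
  rewrite /phi0 /phi; apply: divr_gt0 => //; apply: mulr_gt0 => //.
  apply: ln_gt0; rewrite ltr_pdivlMr // mul1r.
  have : (2%:R : R) <= k%:R by rewrite ler_nat.
  move=> hk; lra.
have N0 : 0 < (#|T|%:R : R) by apply: lt_le_trans hzT; apply: divr_gt0.
have hr : #|P1|%:R / #|[set: T]|%:R = alpha :> R.
  by rewrite cardsT hP1 mulfK ?gt_eqF.
case: hlb => [[L1 _] _ hB1 _ _].
have hwB := hwrB 1%N; rewrite /well_rep hr in hwB.
have /andP[_ hwB1] := hwB (L1 : (1 <= 1 <= L)%N).
set a := alpha / 4.
have a0' : 0 < a by rewrite /a divr_gt0.
pose lg i := phi0 <= (#|cluster rho c i|%:R : R).
pose F i := if lg i then cluster rho c i else set0.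
pose S i := (F i :&: P1) :\: B 1%N.
have hX : Xlarge rho c delta alpha = \bigcup_i F i.
  by rewrite /Xlarge big_mkcond.
have Fdisj : forall i j, i != j -> [disjoint F i & F j].
  move=> i j ij; rewrite /F; case: (lg i); case: (lg j);
    rewrite -?setI_eq0 ?set0I ?setI0 //; rewrite setI_eq0; exact: clus_disj.
have SF : forall i, S i \subset F i.
  by move=> i; rewrite /S; apply: subset_trans (subsetDl _ _) (subsetIl _ _).
have Sdisj : forall i j, i != j -> [disjoint S i & S j].
  by move=> i j ij; apply: disjointW (SF i) (SF j) (Fdisj i j ij).
have FC : forall i x, x \in F i -> x \in cluster rho c i.
  by move=> i x; rewrite /F; case: (lg i); rewrite ?inE.
have hS : forall i, a * #|F i|%:R <= #|S i|%:R.
  move=> i; rewrite /S /F; case lgi: (lg i); last by rewrite set0I set0D cards0 mulr0.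
  set C := cluster rho c i.
  have := hwrC i lgi; rewrite /well_rep hr => /andP[hc _].
  have Cp : 0 < (#|C|%:R : R) by apply: lt_le_trans lgi.
  rewrite ler_pdivlMr // in hc.
  have hcard := cardsID (B 1%N) (C :&: P1).
  have hsub : (#|C :&: P1 :&: B 1%N| <= #|B 1%N :&: P1|)%N.
    apply: subset_leq_card; apply/subsetP => x; rewrite !inE.
    by case/andP => /andP[_ ->] ->.
  have hB1' : (#|B 1%N :&: P1|%:R : R) <= 3 / 2 * alpha * #|B 1%N|%:R.
    have [B0|Bp] := eqVneq #|B 1%N| 0%N.
      have h0 : (#|B 1%N :&: P1| <= #|B 1%N|)%N by apply: subset_leq_card; apply: subsetIl.
      move: h0; rewrite B0 leqn0 => /eqP ->; by rewrite mulr0.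
    by rewrite -ler_pdivrMr // ltr0n lt0n.
  have hsubR : (#|C :&: P1 :&: B 1%N|%:R : R) <= #|B 1%N :&: P1|%:R by rewrite ler_nat.
  have hcardR : (#|C :&: P1 :&: B 1%N|%:R : R) + #|C :&: P1 :\: B 1%N|%:R = #|C :&: P1|%:R.
    by rewrite -natrD hcard.
  have h1 : alpha * phi0 <= alpha * #|C|%:R by rewrite ler_pM2l.
  have h2 : alpha * #|B 1%N|%:R <= alpha * (5 / 2 * (phi0 / 15)) by rewrite ler_pM2l.
  rewrite -/phi0 in hB1; rewrite -/C in hc; rewrite /a; nra.
have key : forall i, \sum_(x in F i) dist rho x Talpha <=
    \sum_(x in F i) dist rho x (centers c) + a^-1 *
      (\sum_(y in S i) dist rho y (centers c) + \sum_(y in S i) dist rho y Talpha).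
  move=> i; have := @core R T rho hm _ _ _ (c i) a a0' Ta0 (SF i) (hS i).
  rewrite [\sum_(x in F i) rho _ _](eq_bigr (fun x => dist rho x (centers c))); last first.
    by move=> x /FC /(@clus_dist R T rho hm) ->.
  rewrite [\sum_(y in S i) rho _ _](eq_bigr (fun x => dist rho x (centers c))) //.
  by move=> x /(subsetP (SF i)) /FC /(@clus_dist R T rho hm) ->.
rewrite /cost hX !(partition_disjoint_bigcup _ _ Fdisj).
apply: le_trans (ler_sum _ (fun i _ => key i)) _.
rewrite big_split /= lerD2l -mulr_sumr.
have -> : 4 / alpha = a^-1 by rewrite /a invf_div.
apply: ler_wpM2l; first by rewrite invr_ge0 ltW.
rewrite big_split /=; apply: lerD;
  rewrite -(partition_disjoint_bigcup _ _ Sdisj); apply: sum_sub => //;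
  try (by move=> x; apply: (@dist_ge0 R T rho hm));
  apply/bigcupsP => i _; rewrite /S.
  by apply: setSD; apply: subsetIr.
by apply: subset_trans (subsetDl _ _) (subsetIr _ _).
Qed.
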